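(* Let $n,m,r$ satisfy $r \ge 16 \log n$. If there exists an $n$-vertex $(m,r)$-locally Ramsey graph, then there exists a graph which is both $\left(m,\frac{r}{17 \log n}\right)$-locally Ramsey and $(r/2,2)$-locally Ramsey.
   Context: All logarithms are base $2$. For a graph $G$ and reals $m,r>0$ (not necessarily integers), $G$ is called $(m,r)$-locally Ramsey if every set of at least $m$ vertices of $G$ contains both a clique and an independent set of size at least $r$. (In particular, $(s,2)$-locally Ramsey means every set of at least $s$ vertices contains both an edge and a non-edge.) *)

(* Defs.v *)
From Stdlib Require Import Reals.
From mathcomp Require Import all_boot.
Set Implicit Arguments.
Local Open Scope R_scope. Unset Strict Implicit. Unset Printing Implicit Defensive.

Definition log2 (x : R) : R := ln x / ln 2.

Definition simple_graph (T : finType) (e : rel T) : Prop :=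
  symmetric e /\ irreflexive e.

Definition is_clique (T : finType) (e : rel T) (K : {set T}) : Prop :=
  {in K &, forall x y, x != y -> e x y}.

Definition is_indep (T : finType) (e : rel T) (I : {set T}) : Prop :=
  {in I &, forall x y, x != y -> ~~ e x y}.

Definition locally_ramsey (T : finType) (e : rel T) (m r : R) : Prop :=
  forall S : {set T}, m <= INR #|S| ->
    (exists K : {set T}, K \subset S /\ is_clique e K /\ r <= INR #|K|) /\
    (exists I : {set T}, I \subset S /\ is_indep e I /\ r <= INR #|I|).

(* Main.v *)
Require Import Defs.
From Stdlib Require Import Reals Lra Lia Psatz ZArith.
From mathcomp Require Import all_boot zify.

(* Stdlib reals + MathComp finite sets.  Proof by a counting
   (probabilistic-method) argument: the graph e' is obtained from e by
   randomly adding and deleting a sparse set of edges. *)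

Lemma subset_of_size (T : finType) (A : {set T}) k :
  (k <= #|A|)%N -> exists2 B : {set T}, B \subset A & #|B| = k.
Proof.
elim: k => [|k IH] hk.
  by exists set0; rewrite ?sub0set ?cards0.
have [B hBA hB] := IH (ltnW hk).
have : (0 < #|A :\: B|)%N.
  rewrite cardsD. have : #|A :&: B| = #|B| by apply/eqP; rewrite (setIidPr hBA).
  move=> ->; lia.
move/card_gt0P => [x]; rewrite inE => /andP[hxB hxA].
exists (x |: B).
  by rewrite subUset sub1set hxA hBA.
by rewrite cardsU1 hxB hB.
Qed.


Set Implicit Arguments. Unset Strict Implicit.

Lemma card_ffun_pred (aT : finType) (N : nat) (D : aT -> pred 'I_N) :
  #|[set f : {ffun aT -> 'I_N} | [forall p, f p \in D p]]| = \prod_p #|D p|.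
Proof.
have -> : #|[set f : {ffun aT -> 'I_N} | [forall p, f p \in D p]]| = #|(family D : simpl_pred {ffun aT -> 'I_N})|.
  apply: eq_card => f; rewrite inE; apply/forallP/familyP => h p; exact: h.
rewrite card_family foldrE big_map big_enum /=. by [].
Qed.

Lemma card_fix_gen (aT : finType) N (F : {set aT}) (P : pred 'I_N) :
  #|[set f : {ffun aT -> 'I_N} | [forall p in F, P (f p)]]| * N ^ #|F|
  = #|P| ^ #|F| * N ^ #|aT|.
Proof.
pose D : aT -> pred 'I_N := fun p => if p \in F then P else predT.
have -> : #|[set f : {ffun aT -> 'I_N} | [forall p in F, P (f p)]]|
   = #|[set f : {ffun aT -> 'I_N} | [forall p, f p \in D p]]|.
  apply: eq_card => f; rewrite !inE; apply/forallP/forallP => h p; have := h p;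
  rewrite /D; case: (p \in F) => //.
rewrite card_ffun_pred (bigID (mem F)) /=.
have E1 : \prod_(i in F) #|D i| = #|P| ^ #|F|.
  by rewrite -prod_nat_const; apply: eq_bigr => p hp; rewrite /D hp.
have E2 : \prod_(i | i \notin F) #|D i| = N ^ #|[predC F]|.
  rewrite -prod_nat_const; apply: eq_big => // p hp.
  rewrite /D (negbTE hp) -[RHS]card_ord; apply: eq_card => x //.
rewrite E1 E2 -mulnA -expnD addnC. by rewrite cardC.
Qed.
Definition key n (u v : 'I_n) : 'I_n * 'I_n := if (u < v)%N then (u, v) else (v, u).
Definition up n (W : {set 'I_n}) : {set 'I_n * 'I_n} :=
  [set p | (p.1 \in W) && (p.2 \in W) && (p.1 < p.2)%N].

Lemma card_up n (W : {set 'I_n}) : #|up W| = 'C(#|W|, 2).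
Proof.
rewrite -cards_draws.
have -> : [set A : {set 'I_n} | A \subset W & #|A| == 2] = (fun p => [set p.1; p.2]) @: up W.
  apply/setP => A; rewrite inE; apply/andP/imsetP.
  - case=> hAW /cards2P [x [y [hxy hA]]].
    have hx : x \in W by apply: (subsetP hAW); rewrite hA !inE eqxx.
    have hy : y \in W by apply: (subsetP hAW); rewrite hA !inE eqxx orbT.
    case: (ltngtP x y) => h.
    + by exists (x, y); rewrite // inE /= hx hy h.
    + by exists (y, x); rewrite ?inE /= ?hx ?hy ?h // hA setUC.
    + by move/eqP: hxy; case; apply: val_inj.
  - case=> [[x y]]; rewrite inE /= => /andP[/andP[hx hy] hxy] ->. split.
    + by apply/subsetP => z; rewrite !inE => /orP[/eqP->|/eqP->].
    + have hne : x != y by apply/eqP => e; rewrite e ltnn in hxy.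
      by rewrite cards2 hne.
rewrite card_in_imset // => [[a b] [c d]]; rewrite !inE /= => /andP[_ hab] /andP[_ hcd] /setP E.
have Ea := E a; have Eb := E b; have Ec := E c; rewrite !inE !eqxx /= in Ea Eb Ec.
rewrite orbT in Eb.
move/esym/orP: Ea => [/eqP ea|/eqP ea].
  subst c. move/esym/orP: Eb => [/eqP eb|/eqP eb]; first by rewrite eb ltnn in hab.
  by rewrite eb.
subst d. move/orP: Ec => [/eqP ec|/eqP ec].
  subst c. by rewrite ltnn in hcd.
subst c. have := ltn_trans hab hcd. by rewrite ltnn.
Qed.
Lemma greedy (T : finType) (Y : rel T) (d : nat) (K : {set T}) :
  symmetric Y ->
  (forall W : {set T}, W \subset K -> W != set0 ->
     exists2 v, v \in W & (#|[set u in W | Y v u]| < d)%N) ->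
  exists I : {set T}, [/\ I \subset K, {in I &, forall x y, x != y -> ~~ Y x y}
                         & (#|K| <= #|I| * d)%N].
Proof.
move=> hsym.
move: (leqnn #|K|); move: {2}#|K| => m.
elim: m K => [|m IH] K hK hW.
  exists set0; split; rewrite ?sub0set //.
    by move=> x y; rewrite inE.
  by move: hK; rewrite leqn0 => /eqP ->.
have [->|hK0] := eqVneq K set0.
  exists set0; split; rewrite ?sub0set ?cards0 //. by move=> x y; rewrite inE.
have [v hvK hv] := hW K (subxx K) hK0.
set Nv := [set u in K | Y v u] in hv.
set K' := K :\: (v |: Nv).
have hK'K : K' \subset K by apply: subsetDl.
have hvK' : v \notin K' by rewrite !inE eqxx.
have hcK' : (#|K'| <= m)%N.
  have : (#|K'| < #|K|)%N.
    apply: proper_card; apply/properP; split => //; exists v => //.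
  lia.
have [I' [hI'K hI' hcI']] := IH K' hcK' (fun W hWK' hW0 => hW W (subset_trans hWK' hK'K) hW0).
exists (v |: I'); split.
- by rewrite subUset sub1set hvK (subset_trans hI'K hK'K).
- have hnot : forall y, y \in I' -> ~~ Y v y.
    move=> y hy; have : y \in K' := subsetP hI'K y hy.
    rewrite !inE negb_or => /andP[/andP[_ hyN] hyK].
    by move: hyN; rewrite hyK.
  move=> x y; rewrite !inE => /orP[/eqP->|hx] /orP[/eqP->|hy] hxy.
  + by rewrite eqxx in hxy.
  + exact: hnot.
  + by rewrite hsym; apply: hnot.
  + exact: hI'.
- have hvI' : v \notin I' by apply: contra hvK'; apply: (subsetP hI'K).
  rewrite cardsU1 hvI' /=.
  have h1 := cardsID (v |: Nv) K.
  have h2 : (#|K :&: (v |: Nv)| <= #|v |: Nv|)%N by apply: subset_leq_card; apply: subsetIr.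
  have h3 : (#|v |: Nv| <= 1 + #|Nv|)%N by rewrite cardsU1; case: (v \notin Nv).
  rewrite -/K' in h1.
  nia.
Qed.
Lemma sum_row (T : finType) (A : {set T * T}) :
  \sum_v #|[set u | (v, u) \in A]| = #|A|.
Proof.
under eq_bigr => v _ do rewrite -sum1dep_card big_mkcond /=.
rewrite pair_bigA /= -sum1_card [RHS]big_mkcond /=.
by apply: eq_bigr => -[x y].
Qed.

Lemma sum_col (T : finType) (A : {set T * T}) :
  \sum_v #|[set u | (u, v) \in A]| = #|A|.
Proof.
under eq_bigr => v _ do rewrite -sum1dep_card big_mkcond /=.
rewrite exchange_big pair_bigA /= -sum1_card [RHS]big_mkcond /=.
by apply: eq_bigr => -[x y].
Qed.

Definition Zf n N (f : {ffun 'I_n * 'I_n -> 'I_N}) (a : 'I_N) (u v : 'I_n) : bool :=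
  (u != v) && (f (key u v) == a).

Lemma key_sym n (u v : 'I_n) : u != v -> key u v = key v u.
Proof.
rewrite /key => huv; case: (ltngtP u v) => h //.
by move/eqP: huv; case; apply: val_inj.
Qed.

Lemma Zf_sym n N (f : {ffun 'I_n * 'I_n -> 'I_N}) a : symmetric (Zf f a).
Proof.
move=> u v; rewrite /Zf; case: (eqVneq u v) => [->|h] //. by rewrite /= key_sym.
Qed.

Lemma deg_sum n N (f : {ffun 'I_n * 'I_n -> 'I_N}) a (W : {set 'I_n}) :
  (\sum_(v in W) #|[set u in W | Zf f a v u]| <= 2 * #|[set p in up W | f p == a]|)%N.
Proof.
set A := [set p in up W | f p == a].
apply: (@leq_trans (\sum_(v in W) (#|[set u | (v, u) \in A]| + #|[set u | (u, v) \in A]|))).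
  apply: leq_sum => v hv.
  apply: leq_trans (leq_card_setU _ _).
  apply: subset_leq_card; apply/subsetP => u; rewrite !inE => /andP[hu /andP[huv hf]].
  move: hf; rewrite /key; case: (ltngtP v u) => h hf.
  - by rewrite /= hv hu hf.
  - by rewrite /= hv hu hf orbT.
  - by move/eqP: huv; case; apply: val_inj.
apply: (@leq_trans (\sum_v (#|[set u | (v, u) \in A]| + #|[set u | (u, v) \in A]|))).
  by rewrite [X in (_ <= X)%N](bigID (mem W)) /= leq_addr.
by rewrite big_split /= sum_row sum_col addnn mul2n.
Qed.

Lemma union_bound (I T : finType) (P : pred I) (Q : I -> pred T) :
  (#|[set x | [exists i, P i && Q i x]]| <= \sum_(i | P i) #|[set x | Q i x]|)%N.
Proof.
apply: (@leq_trans #|\bigcup_(i | P i) [set x | Q i x]|).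
  apply: subset_leq_card; apply/subsetP => x; rewrite inE => /existsP[i /andP[hi hq]].
  by apply/bigcupP; exists i; rewrite ?inE.
elim/big_rec2: _ => [|i y X hi hX]; first by rewrite cards0.
apply: leq_trans (leq_card_setU _ _) _. by rewrite leq_add2l.
Qed.

Lemma group_by_size (T : finType) (P : pred nat) (h : nat -> nat) :
  \sum_(W : {set T} | P #|W|) h #|W| = \sum_(w < #|T|.+1 | P w) 'C(#|T|, w) * h w.
Proof.
rewrite (partition_big (fun W : {set T} => inord #|W| : 'I_#|T|.+1) (fun w : 'I_#|T|.+1 => P w)) /=; last first.
  by move=> W hW; rewrite inordK // ltnS max_card.
apply: eq_bigr => w hw.
rewrite (eq_bigr (fun _ => h w)); last first.
  move=> W /andP[_ /eqP <-]; rewrite inordK // ltnS max_card //.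
rewrite sum_nat_const; congr (_ * _).
rewrite -card_draws; apply: eq_card => W; rewrite !inE.
apply/andP/eqP => [[_ /eqP <-]|hW]; first by rewrite inordK // ltnS max_card.
split; first by rewrite hW.
apply/eqP; apply: val_inj; rewrite /= inordK hW // ltnS max_card.
Qed.

Definition Eb (d w : nat) := ((w * d).+1 %/ 2)%N.

Definition BA n N s (a : 'I_N) := [set f : {ffun 'I_n * 'I_n -> 'I_N} |
  [exists S : {set 'I_n}, (#|S| == s) && [forall p in up S, f p != a]]].

Definition BB n N k d (a : 'I_N) := [set f : {ffun 'I_n * 'I_n -> 'I_N} |
  [exists W : {set 'I_n}, ((0 < #|W|) && (#|W| <= k)) &&
     [exists F : {set 'I_n * 'I_n}, ((F \subset up W) && (#|F| == Eb d #|W|))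
        && [forall p in F, f p == a]]]].

Arguments BA : clear implicits.
Arguments BB : clear implicits.

Lemma card_Bneq n N (F : {set 'I_n * 'I_n}) (a : 'I_N) :
  #|[set f : {ffun 'I_n * 'I_n -> 'I_N} | [forall p in F, f p != a]]| * N ^ #|F|
  = (N.-1) ^ #|F| * N ^ #|{: 'I_n * 'I_n}|.
Proof.
have := card_fix_gen F (fun x : 'I_N => x != a).
have -> : #|(fun x : 'I_N => x != a)| = N.-1.
  by rewrite -[in RHS](card_ord N) -(cardC1 a); apply: eq_card.
done.
Qed.

Lemma card_Beq n N (F : {set 'I_n * 'I_n}) (a : 'I_N) :
  #|[set f : {ffun 'I_n * 'I_n -> 'I_N} | [forall p in F, f p == a]]|
  = N ^ (#|{: 'I_n * 'I_n}| - #|F|).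
Proof.
have := card_fix_gen F (fun x : 'I_N => x == a).
have -> : #|(fun x : 'I_N => x == a)| = 1.
  by rewrite -(card1 a); apply: eq_card.
rewrite exp1n mul1n.
have hF : (#|F| <= #|{: 'I_n * 'I_n}|)%N by apply: max_card.
case: N a => [|N] a; first by case: a.
set P := #|{: 'I_n * 'I_n}| in hF *.
set c := #|_|.
have -> : (N.+1 ^ P = N.+1 ^ (P - #|F|) * N.+1 ^ #|F|)%N by rewrite -expnD subnK.
move/eqP; rewrite eqn_pmul2r ?expn_gt0 //; by move/eqP.
Qed.

Lemma BA_bound n N s (a : 'I_N) :
  (16 * 'C(n,s) * (N.-1) ^ 'C(s,2) <= N ^ 'C(s,2))%N ->
  (16 * #|BA n N s a| <= N ^ #|{: 'I_n * 'I_n}|)%N.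
Proof.
move=> H.
have hN : (0 < N)%N by case: N a {H} => [[]|].
have hu := union_bound (fun S : {set 'I_n} => #|S| == s)
   (fun S (f : {ffun 'I_n * 'I_n -> 'I_N}) => [forall p in up S, f p != a]).
rewrite -/(BA n N s a) in hu.
set M := 'C(s,2) in H *.
have hsum : ((\sum_(S : {set 'I_n} | #|S| == s) #|[set f : {ffun 'I_n * 'I_n -> 'I_N} | [forall p in up S, f p != a]]|) * N ^ M
   = 'C(n,s) * ((N.-1) ^ M * N ^ #|{: 'I_n * 'I_n}|))%N.
  rewrite big_distrl /=.
  rewrite (eq_bigr (fun _ => (N.-1) ^ M * N ^ #|{: 'I_n * 'I_n}|)%N); last first.
    by move=> S /eqP hS; rewrite /M -hS -card_up card_Bneq.
  by rewrite sum_nat_cond_const card_draws card_ord.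
have : (16 * #|BA n N s a| * N ^ M <= N ^ M * N ^ #|{: 'I_n * 'I_n}|)%N.
  apply: (@leq_trans (16 * ('C(n,s) * ((N.-1) ^ M * N ^ #|{: 'I_n * 'I_n}|)))).
    rewrite -mulnA leq_mul2l /= -hsum. by rewrite leq_mul2r hu orbT.
  rewrite mulnA mulnA. rewrite leq_mul2r. apply/orP; right. exact: H.
rewrite [X in (_ <= X)%N -> _]mulnC leq_pmul2r //; by rewrite expn_gt0 hN.
Qed.

Lemma bin2_eqn s : ('C(s,2) * 2 = s * s.-1)%N.
Proof.
elim: s => [|s IH] //. rewrite binS bin1 mulnDl IH. case: s {IH} => //= s. lia.
Qed.

Lemma BB_bound n N k d (a : 'I_N) :
  (0 < n)%N ->
  (forall w, 0 < w -> w <= k -> w <= n ->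
     8 * n * 'C(n,w) * 'C('C(w,2), Eb d w) <= N ^ Eb d w)%N ->
  (8 * #|BB n N k d a| <= N ^ #|{: 'I_n * 'I_n}|)%N.
Proof.
move=> hn H.
have hN : (0 < N)%N by case: N a {H} => [[]|].
set P := #|{: 'I_n * 'I_n}|.
have hP : P = (n * n)%N by rewrite /P card_prod card_ord.
pose g w := ('C('C(w,2), Eb d w) * N ^ (P - Eb d w))%N.
have h1 : (#|BB n N k d a| <= \sum_(W : {set 'I_n} | (0 < #|W|) && (#|W| <= k)) g #|W|)%N.
  apply: leq_trans (union_bound _ _) _.
  apply: leq_sum => W hW.
  apply: leq_trans (union_bound _ _) _.
  rewrite (eq_bigr (fun _ => N ^ (P - Eb d #|W|)))%N; last first.
    by move=> F /andP[_ /eqP <-]; rewrite card_Beq.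
  rewrite sum_nat_cond_const /g -card_up.
  by rewrite cards_draws.
have h2 := @group_by_size ('I_n) (fun w => (0 < w) && (w <= k)) g.
rewrite card_ord /= in h2. rewrite h2 in h1.
have h3 : forall w : 'I_n.+1, (0 < w) && (w <= k) -> (8 * n * ('C(n, w) * g w) <= N ^ P)%N.
  move=> w /andP[hw0 hwk].
  have hwn : (w <= n)%N by rewrite -ltnS.
  have := H w hw0 hwk hwn.
  rewrite /g. set E := Eb d w. set M := 'C(w,2).
  case: (leqP E M) => hEM; last by rewrite (bin_small hEM) !muln0.
  have hMP : (E <= P)%N.
    apply: leq_trans hEM _. rewrite hP /M.
    have := bin2_eqn w. nia.
  move=> hb.
  have -> : (N ^ P = N ^ E * N ^ (P - E))%N by rewrite -expnD subnKC.
  rewrite !mulnA leq_mul2r hb orbT //.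
have h4 : (n * (8 * #|BB n N k d a|) <= n * N ^ P)%N.
  apply: (@leq_trans (\sum_(i < n.+1 | (0 < i) && (i <= k)) 8 * n * ('C(n, i) * g i))).
    rewrite -big_distrr /= mulnA [(n * 8)%N]mulnC leq_mul2l. by rewrite h1 orbT.
  apply: (@leq_trans (\sum_(i < n.+1 | (0 < i) && (i <= k)) N ^ P)); first by apply: leq_sum.
  rewrite sum_nat_cond_const leq_mul2r; apply/orP; right.
  have hc : (#|[set x : 'I_n.+1 | (0 < x) && (x <= k)]| <= #|'I_n.+1|.-1)%N.
    rewrite -(cardC1 (@ord0 n)).
    apply: subset_leq_card; apply/subsetP => w; rewrite !inE => /andP[h _].
    by apply/eqP => e; rewrite e in h.
  by rewrite card_ord in hc.
by rewrite leq_pmul2l in h4.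
Qed.

Lemma exists_good n N s k d (a0 a1 : 'I_N) :
  (16 * 'C(n,s) * (N.-1) ^ 'C(s,2) <= N ^ 'C(s,2))%N ->
  (0 < n)%N ->
  (forall w, 0 < w -> w <= k -> w <= n ->
     8 * n * 'C(n,w) * 'C('C(w,2), Eb d w) <= N ^ Eb d w)%N ->
  exists f : {ffun 'I_n * 'I_n -> 'I_N},
    [/\ f \notin BA n N s a0, f \notin BA n N s a1,
        f \notin BB n N k d a0 & f \notin BB n N k d a1].
Proof.
move=> hA hn hB.
have hN : (0 < N)%N by case: N a0 {hA hB a1} => [[]|].
have hA0 := BA_bound a0 hA. have hA1 := BA_bound a1 hA.
have hB0 := BB_bound a0 hn hB. have hB1 := BB_bound a1 hn hB.
set U := BA n N s a0 :|: BA n N s a1 :|: BB n N k d a0 :|: BB n N k d a1.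
set P := #|{: 'I_n * 'I_n}| in hA0 hA1 hB0 hB1.
have hU : (#|U| <= #|BA n N s a0| + #|BA n N s a1| + #|BB n N k d a0| + #|BB n N k d a1|)%N.
  rewrite /U. apply: leq_trans (leq_card_setU _ _) _. rewrite leq_add2r.
  apply: leq_trans (leq_card_setU _ _) _. rewrite leq_add2r.
  exact: leq_card_setU.
have hNP : (0 < N ^ P)%N by rewrite expn_gt0 hN.
have hT : #|{: {ffun 'I_n * 'I_n -> 'I_N}}| = (N ^ P)%N by rewrite card_ffun card_ord.
have hc : (0 < #|~: U|)%N.
  have := cardsC U. rewrite hT. lia.
case/card_gt0P: hc => f; rewrite inE !in_setU !negb_or => /andP[/andP[/andP[h1 h2] h3] h4].
by exists f.
Qed.

Lemma notBB_greedy n N k d (f : {ffun 'I_n * 'I_n -> 'I_N}) a (K0 : {set 'I_n}) :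
  f \notin BB n N k d a -> (#|K0| <= k)%N ->
  forall W : {set 'I_n}, W \subset K0 -> W != set0 ->
    exists2 v, v \in W & (#|[set u in W | Zf f a v u]| < d)%N.
Proof.
move=> hf hK W hWK hW0.
case: (boolP [exists v in W, #|[set u in W | Zf f a v u]| < d]%N).
  by move/existsP => [v /andP[hv hd]]; exists v.
rewrite negb_exists => /forallP hall.
have hall' : forall v, v \in W -> (d <= #|[set u in W | Zf f a v u]|)%N.
  by move=> v hv; have := hall v; rewrite hv /= -leqNgt.
have hsum : (#|W| * d <= 2 * #|[set p in up W | f p == a]|)%N.
  apply: leq_trans (deg_sum f a W).
  rewrite -sum_nat_const. exact: leq_sum.
have hw : (#|W| <= k)%N by apply: leq_trans (subset_leq_card hWK) hK.
have hw0 : (0 < #|W|)%N by rewrite card_gt0.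
have hE : (Eb d #|W| <= #|[set p in up W | f p == a]|)%N by rewrite /Eb; lia.
have [F hFA hF] := subset_of_size _ _ _ hE.
exfalso; move/negP: hf; apply; rewrite inE.
apply/existsP; exists W; rewrite hw0 hw /=.
apply/existsP; exists F; rewrite hF eqxx andbT.
rewrite (subset_trans hFA) /=; last by apply/subsetP => p; rewrite inE => /andP[].
apply/forallP => p; apply/implyP => hp.
by have := subsetP hFA p hp; rewrite inE => /andP[].
Qed.

Lemma notBA n N s (f : {ffun 'I_n * 'I_n -> 'I_N}) a :
  f \notin BA n N s a -> forall S0 : {set 'I_n}, #|S0| = s ->
  exists u v, [/\ u \in S0, v \in S0, u != v & Zf f a u v].
Proof.
move=> hf S0 hS0.
case: (boolP [exists p in up S0, f p == a]).
  move/existsP => [[u v] /andP[hp hfp]]; move: hp; rewrite inE /= => /andP[/andP[hu hv] huv].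
  have hne : u != v by apply/eqP => e; rewrite e ltnn in huv.
  exists u, v; split => //. by rewrite /Zf hne /key huv.
rewrite negb_exists => /forallP hall.
exfalso; move/negP: hf; apply; rewrite inE.
apply/existsP; exists S0; rewrite hS0 eqxx /=.
apply/forallP => p; apply/implyP => hp. by have := hall p; rewrite hp.
Qed.


Unset Implicit Arguments. Set Strict Implicit.
Local Open Scope R_scope.

Lemma floor_nat x : 0 <= x -> exists N : nat, INR N <= x < INR N + 1.
Proof.
move=> hx. have [h1 h2] := base_Int_part x.
have hz : (0 <= Int_part x)%Z.
  have : (-1 < Int_part x)%Z by apply: lt_IZR; lra.
  lia.
exists (Z.to_nat (Int_part x)).
rewrite INR_IZR_INZ Z2Nat.id //. lra.
Qed.

Lemma ceil_nat x : 0 <= x -> exists k : nat, x <= INR k < x + 1.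
Proof.
move=> hx. have [N [h1 h2]] := floor_nat x hx.
case: (Req_dec (INR N) x) => h.
  exists N; lra.
exists N.+1; rewrite S_INR; lra.
Qed.


Lemma INR_mul a b : INR (a * b)%N = INR a * INR b.
Proof. exact: mult_INR. Qed.
Lemma INR_add a b : INR (a + b)%N = INR a + INR b.
Proof. exact: plus_INR. Qed.
Lemma INR_exp a b : INR (a ^ b)%N = INR a ^ b.
Proof. elim: b => [|b IH] //=. by rewrite expnS INR_mul IH. Qed.
Lemma INR_leq {a b} : (a <= b)%N -> INR a <= INR b.
Proof. by move/leP; apply: le_INR. Qed.
Lemma INR_fact_pos a : 0 < INR (a `!).
Proof. apply: lt_0_INR; apply/ltP; exact: fact_gt0. Qed.

Lemma pow_exp x n : 0 < x -> x ^ n = exp (INR n * ln x).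
Proof.
move=> hx; rewrite -ln_pow // exp_ln //; exact: pow_lt.
Qed.

Lemma exp_pow a n : exp a ^ n = exp (INR n * a).
Proof. by rewrite pow_exp ?ln_exp //; apply: exp_pos. Qed.

Lemma succ_pow_le E : (INR E + 1) ^ E <= exp 1 * INR E ^ E.
Proof.
case: E => [|E]. simpl. have := exp_ineq1_le 1. lra.
set x := INR E.+1.
have hx : 0 < x by apply: lt_0_INR; lia.
have -> : x + 1 = x * (1 + / x) by field; lra.
rewrite Rpow_mult_distr Rmult_comm; apply: Rmult_le_compat_r.
  by apply: pow_le; lra.
apply: Rle_trans (_ : exp (/ x) ^ E.+1 <= _).
  apply: pow_incr; split; [have := Rinv_0_lt_compat x hx; lra | exact: exp_ineq1_le].
rewrite exp_pow -/x; right; congr exp; field; lra.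
Qed.

Lemma fact_bound E : INR E ^ E <= exp (INR E) * INR (E `!).
Proof.
elim: E => [|E IH]. simpl. rewrite exp_0; lra.
rewrite factS INR_mul S_INR /=.
have h1 := succ_pow_le E.
have h2 : exp (INR E + 1) = exp (INR E) * exp 1 by rewrite exp_plus.
rewrite h2.
have hE : 0 <= INR E by apply: pos_INR.
have he : 0 < exp 1 by apply: exp_pos.
have : (INR E + 1) * (INR E + 1) ^ E <= (INR E + 1) * (exp 1 * (exp (INR E) * INR (E`!))).
  apply: Rmult_le_compat_l; first lra.
  apply: Rle_trans h1 _. apply: Rmult_le_compat_l; lra.
nra.
Qed.

Lemma ln2_le : ln 2 <= 3/4.
Proof.
have h : 2 <= exp (3/4).
  have -> : 3/4 = INR 8 * (3/32) by simpl; lra.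
  rewrite -exp_pow.
  apply: Rle_trans (_ : (1 + 3/32) ^ 8 <= _).
    simpl; lra.
  apply: pow_incr; split; [lra|exact: exp_ineq1_le].
have [hl|he] := h. left; rewrite -[X in _ < X]ln_exp; apply: ln_increasing; lra. rewrite he ln_exp; lra.
Qed.


Goal (3 <= 4)%N. lia. Qed.

Lemma ffact_le n m : (n ^_ m <= n ^ m)%N.
Proof.
elim: m n => [|m IH] n //. rewrite ffactnS expnS leq_mul2l.
case: n => [|n] //=. apply: leq_trans (IH n) _.
by case: (m) => [|m']; rewrite ?expn0 // leq_exp2r.
Qed.

Lemma bin_fact_le n m : INR 'C(n,m) * INR (m`!) <= INR n ^ m.
Proof. rewrite -INR_mul bin_ffact -INR_exp. apply: INR_leq. exact: ffact_le. Qed.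

Lemma bin2_eq s : ('C(s,2) * 2 = s * s.-1)%N.
Proof.
elim: s => [|s IH] //. rewrite binS bin1 mulnDl IH. case: s {IH} => //= s. lia.
Qed.

Lemma fact_ge {w} : (4 <= w)%N -> (24 <= w`!)%N.
Proof.
move=> h; have [t ->] : exists t, w = (t + 4)%N by exists (w - 4)%N; lia.
rewrite !addnS !factS addn0. have := fact_gt0 t. nia.
Qed.

Lemma INR_bin2 s : INR 'C(s,2) = INR s * (INR s - 1) / 2.
Proof.
have h := bin2_eq s. have h2 : INR ('C(s,2) * 2) = INR (s * s.-1) by rewrite h.
rewrite !INR_mul /= in h2. case: s h h2 => [|s] h h2. simpl in *. lra.
rewrite -pred_Sn S_INR in h2. rewrite S_INR. lra.
Qed.

Lemma ln2_pos : 0 < ln 2.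
Proof. have := ln_lt_2. lra. Qed.

Lemma INR_le_nat a b : INR a <= INR b -> (a <= b)%N.
Proof. by move/INR_le/leP. Qed.

Lemma coreA (n N s : nat) (r L : R) :
  (2 <= n)%N -> ln (INR n) = L * ln 2 -> 1 <= L -> 16 * L <= r ->
  (1 <= N)%N -> INR N * (7/2 * L) <= r -> r/2 <= INR s ->
  (16 * 'C(n,s) * (N-1) ^ 'C(s,2) <= N ^ 'C(s,2))%N.
Proof.
move=> hn hL hL1 hr hN1 hNr hs.
apply: INR_le_nat. rewrite !INR_mul !INR_exp minus_INR; last by apply/leP.
set M := 'C(s,2).
have hMe := INR_bin2 s; rewrite -/M in hMe.
have hs8 : (8 <= s)%N by apply: INR_le_nat; simpl; lra.
have hf : 24 <= INR (s`!).
  have h : (4 <= s)%N by lia. have := INR_leq (fact_ge h); simpl; lra.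
have hb := bin_fact_le n s.
have hNp : 1 <= INR N by have := INR_leq hN1; simpl; lra.
have hnp : 2 <= INR n by have := INR_leq hn; simpl; lra.
set C := INR 'C(n, s) in hb *.
have hC : 0 <= C by apply: pos_INR.
have h1 : (INR N - 1) ^ M <= INR N ^ M * exp (- (INR M / INR N)).
  have -> : INR N - 1 = INR N * (1 - / INR N) by field; lra.
  rewrite Rpow_mult_distr. apply: Rmult_le_compat_l; first by apply: pow_le; lra.
  have -> : - (INR M / INR N) = INR M * (- / INR N) by field; lra.
  rewrite -exp_pow. apply: pow_incr; split.
    have : / INR N <= 1 by rewrite -Rinv_1; apply: Rinv_le_contravar; lra.
    lra.
  have := exp_ineq1_le (- / INR N). lra.
have h2 : INR n ^ s = exp (INR s * ln (INR n)) by apply: pow_exp; lra.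
have hl2 := ln2_le. have hl2p := ln2_pos.
have h3 : INR s * ln (INR n) - INR M / INR N <= 0.
  rewrite hMe hL.
  have hNL : 2 * INR N * (L * ln 2) <= INR s - 1 by nra.
  have -> : INR s * (L * ln 2) - INR s * (INR s - 1) / 2 / INR N =
            INR s / (2 * INR N) * (2 * INR N * (L * ln 2) - (INR s - 1)) by field; lra.
  have : 0 <= INR s / (2 * INR N).
    apply: Rle_mult_inv_pos; [apply: pos_INR| lra].
  nra.
have h4 : exp (INR s * ln (INR n) - INR M / INR N) <= 1.
  rewrite -exp_0; destruct h3 as [h3|h3]; [left; apply: exp_increasing; lra | rewrite h3; lra].
rewrite exp_plus in h4.
have hNM : 0 < INR N ^ M by apply: pow_lt; lra.
have hE : 0 < exp (- (INR M / INR N)) by apply: exp_pos.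
have hCs : C <= INR n ^ s / INR (s`!).
  apply: (Rmult_le_reg_r (INR (s`!))); first lra. field_simplify; lra.
have : 16 * C * (INR N - 1) ^ M <= 16 * (INR n ^ s / INR (s`!)) * (INR N ^ M * exp (- (INR M / INR N))).
  apply: Rmult_le_compat; try nra. apply: pow_le; lra.
rewrite h2.
have -> : 16 * (exp (INR s * ln (INR n)) / INR (s`!)) * (INR N ^ M * exp (- (INR M / INR N)))
  = (16 / INR (s`!)) * INR N ^ M * (exp (INR s * ln (INR n)) * exp (- (INR M / INR N))) by field; lra.
move=> h5. have -> : INR 16 = 16 by simpl; lra. rewrite (_ : INR 1 = 1) //. eapply Rle_trans; first exact: h5.
have h6 : 16 / INR (s`!) <= 1 by apply: (Rmult_le_reg_r (INR (s`!))); [lra| field_simplify; lra].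
have h7 : 0 <= exp (INR s * ln (INR n)) * exp (- (INR M / INR N)) by apply: Rmult_le_pos; left; apply: exp_pos.
have h8 : 0 <= 16 / INR (s`!) by apply: Rle_mult_inv_pos; lra.
set a := 16 / INR (s`!) in h6 h8 *. set b := exp _ * exp _ in h4 h7 *.
have hab : a * b <= 1 by nra.
have -> : a * INR N ^ M * b = (a * b) * INR N ^ M by ring.
nra.
Qed.

Lemma ln_rho : ln (105/128) <= - (ln 2) / 4.
Proof.
have h8 : (105/128) ^ 8 <= / 4 by simpl; lra.
have h : ln ((105/128)^8) <= ln (/ 4).
  destruct h8 as [h8|h8]; [left; apply: ln_increasing => //; apply: pow_lt; lra | rewrite h8; lra].
rewrite ln_pow in h; last lra.
rewrite ln_Rinv in h; last lra.
rewrite (_ : 4 = 2 ^ 2) in h; last by simpl; lra.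
rewrite ln_pow in h; last lra. simpl in h. lra.
Qed.

Lemma coreB (n N d w E : nat) (r L : R) :
  (2 <= n)%N -> ln (INR n) = L * ln 2 -> 1 <= L -> 16 * L <= r ->
  (4 <= N)%N -> r < (INR N + 1) * (7/2 * L) -> 17 * L - 1 < INR d ->
  (1 <= w)%N -> INR w < r + 1 -> (w * d <= 2 * E)%N -> (E <= 'C(w,2))%N ->
  (8 * n * 'C(n,w) * 'C('C(w,2),E) <= N ^ E)%N.
Proof.
move=> hn hL hL1 hr hN4 hNr hd hw1 hwr hwd hEM.
have hd16 : 16 * L <= INR d by lra.
have hd16n : (16 <= d)%N by apply: INR_le_nat; simpl; lra.
have hb2 := bin2_eq w.
have hdw : (d < w)%N.
  have : (w * d <= w * w.-1)%N by lia.
  rewrite leq_mul2l; case/orP => [/eqP h|h]; first lia. lia.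
have hE1 : (1 <= E)%N by nia.
apply: INR_le_nat. rewrite !INR_mul !INR_exp.
set M := 'C(w,2).
have hMe := INR_bin2 w; rewrite -/M in hMe.
have hf : 24 <= INR (w`!).
  have h : (4 <= w)%N by lia. have := INR_leq (fact_ge h); simpl; lra.
have hb1 := bin_fact_le n w.
have hb2' := bin_fact_le M E.
have hfe := fact_bound E.
have hNp : 4 <= INR N by have := INR_leq hN4; simpl; lra.
have hnp : 2 <= INR n by have := INR_leq hn; simpl; lra.
have hEp : 1 <= INR E by have := INR_leq hE1; simpl; lra.
have hwp : 1 <= INR w by have := INR_leq hw1; simpl; lra.
have hwdE : INR w * INR d <= 2 * INR E.
  have := INR_leq hwd; rewrite !INR_mul; simpl; lra.
have hl2 := ln2_le. have hl2p := ln2_pos.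
have he3 := exp_le_3.
have hep : 0 < exp 1 by apply: exp_pos.
set c1 := INR 'C(n, w) in hb1 *.
set c2 := INR 'C(M, E) in hb2' *.
have hc1 : 0 <= c1 by apply: pos_INR.
have hc2 : 0 <= c2 by apply: pos_INR.
have hMp : 0 <= INR M by apply: pos_INR.
have hfE : 0 < INR (E`!) by apply: INR_fact_pos.
have hNL : r <= 35/8 * (INR N * L) by nra.
have hrat : exp 1 * INR M <= 105/128 * INR N * INR E.
  rewrite hMe.
  have h1 : exp 1 * (INR w * (INR w - 1) / 2) <= 3 * (INR w * r / 2).
    have : 0 <= INR w * (INR w - 1) / 2 by nra.
    have : INR w * (INR w - 1) / 2 <= INR w * r / 2 by nra.
    nra.
  have h2 : 3 * (INR w * r / 2) <= 105/128 * INR N * (INR w * INR d / 2).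
    have : 16 * L * INR N <= INR d * INR N by nra.
    nra.
  nra.
have hc2b : c2 <= (105/128) ^ E * INR N ^ E.
  have hEE : 0 < INR E ^ E by apply: pow_lt; lra.
  have h1 : c2 <= INR M ^ E / INR (E`!).
    apply: (Rmult_le_reg_r (INR (E`!))) => //. field_simplify; lra.
  have h2 : INR M ^ E / INR (E`!) <= INR M ^ E * exp (INR E) / INR E ^ E.
    apply: (Rmult_le_reg_r (INR E ^ E)) => //.
    apply: (Rmult_le_reg_r (INR (E`!))) => //.
    field_simplify; try lra.
    have : 0 <= INR M ^ E by apply: pow_le.
    have : 0 < exp (INR E) by apply: exp_pos.
    nra.
  have h3 : INR M ^ E * exp (INR E) / INR E ^ E = (exp 1 * INR M / INR E) ^ E.
    rewrite -(Rmult_1_r (INR E)) -exp_pow Rmult_1_r. rewrite !Rpow_mult_distr.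
    rewrite Rdiv_def pow_inv. field. apply: pow_nonzero; lra.
  rewrite h3 in h2. rewrite -Rpow_mult_distr.
  eapply Rle_trans; first exact: h1. eapply Rle_trans; first exact: h2.
  apply: pow_incr; split.
    apply: Rle_mult_inv_pos; [nra|lra].
  apply: (Rmult_le_reg_r (INR E)); first lra. field_simplify; lra.
have hexp : INR n * INR n ^ w * (105/128) ^ E <= 1.
  have hnw : INR n <= INR n ^ w.
    have -> : w = (w.-1).+1 by lia. simpl. 
    have : 1 <= INR n ^ w.-1 by apply: pow_R1_Rle; lra.
    nra.
  rewrite (pow_exp (INR n) w); last lra.
  rewrite (pow_exp (105/128) E); last lra.
  have hrho := ln_rho.
  have hx : INR n <= exp (INR w * ln (INR n)).
    by rewrite -pow_exp; [exact: hnw|lra].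
  have hk : INR w * ln (INR n) + INR w * ln (INR n) + INR E * ln (105 / 128) <= 0.
    rewrite hL.
    have : INR E * ln (105/128) <= INR E * (- ln 2 / 4) by apply: Rmult_le_compat_l; lra.
    have : 8 * L * INR w <= INR E by nra.
    nra.
  have hk' : exp (INR w * ln (INR n)) * exp (INR w * ln (INR n)) * exp (INR E * ln (105/128)) <= 1.
    rewrite -!exp_plus -exp_0.
    destruct hk as [hk|hk]; [left; apply: exp_increasing; lra| rewrite hk; lra].
  have : 0 < exp (INR E * ln (105 / 128)) by apply: exp_pos.
  nra.
have -> : INR 8 = 8 by simpl; lra.
have hc1b : c1 <= INR n ^ w / INR (w`!).
  apply: (Rmult_le_reg_r (INR (w`!))); first lra. field_simplify; lra.
have hNE : 0 < INR N ^ E by apply: pow_lt; lra.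
have hrE : 0 < (105/128) ^ E by apply: pow_lt; lra.
have hnw0 : 0 < INR n ^ w by apply: pow_lt; lra.
have : 8 * INR n * c1 * c2 <= 8 * INR n * (INR n ^ w / INR (w`!)) * ((105 / 128) ^ E * INR N ^ E).
  apply: Rmult_le_compat; try nra.
have -> : 8 * INR n * (INR n ^ w / INR (w`!)) * ((105 / 128) ^ E * INR N ^ E)
  = (8 / INR (w`!)) * (INR n * INR n ^ w * (105/128)^E) * INR N ^ E by field; lra.
have h8 : 8 / INR (w`!) <= 1 by apply: (Rmult_le_reg_r (INR (w`!))); [lra| field_simplify; lra].
have h8p : 0 <= 8 / INR (w`!) by apply: Rle_mult_inv_pos; lra.
have hpp : 0 <= INR n * INR n ^ w * (105/128)^E by apply: Rmult_le_pos; [apply: Rmult_le_pos|]; lra.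
set a := 8 / INR (w`!) in h8 h8p *. set b := INR n * INR n ^ w * (105/128)^E in hexp hpp *.
have hab : a * b <= 1 by nra.
nra.
Qed.

Definition e2 n N (e : rel 'I_n) (f : {ffun 'I_n * 'I_n -> 'I_N}) (a0 a1 : 'I_N) : rel 'I_n :=
  fun u v => (u != v) && ((e u v && ~~ Zf f a1 u v) || Zf f a0 u v).

Arguments e2 {n N}.

Lemma pair_clique (T : finType) (R : rel T) u v :
  symmetric R -> R u v -> is_clique R [set u; v].
Proof.
move=> hs huv x y; rewrite !inE => /orP[/eqP->|/eqP->] /orP[/eqP->|/eqP->];
  rewrite ?eqxx // => _; by rewrite // hs.
Qed.

Lemma pair_indep (T : finType) (R : rel T) u v :
  symmetric R -> ~~ R u v -> is_indep R [set u; v].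
Proof.
move=> hs huv x y; rewrite !inE => /orP[/eqP->|/eqP->] /orP[/eqP->|/eqP->];
  rewrite ?eqxx // => _; by rewrite // hs.
Qed.

Lemma ln_mono x y : 0 < x -> x <= y -> ln x <= ln y.
Proof.
move=> hx [h|->]; [left; apply: ln_increasing => //| lra].
Qed.

Theorem lemma3p1 (n : nat) (m r : R) :
  (2 <= n)%N -> 0 < m -> 0 < r ->
  16 * log2 (INR n) <= r ->
  (exists e : rel 'I_n, simple_graph e /\ locally_ramsey e m r) ->
  exists e' : rel 'I_n, simple_graph e' /\
    locally_ramsey e' m (r / (17 * log2 (INR n))) /\
    locally_ramsey e' (r / 2) 2.
Proof.
move=> hn hm hr hLr [e [[esym eirr] hram]].
set L := log2 (INR n) in hLr *.
have hnR : 2 <= INR n by have := INR_leq hn; simpl; lra.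
have hl2 := ln2_pos.
have hLn : ln (INR n) = L * ln 2 by rewrite /L /log2; field; lra.
have hL1 : 1 <= L.
  have : ln 2 <= ln (INR n) by apply: ln_mono; lra.
  rewrite hLn. nra.
have hq : 0 <= r / (7/2 * L) by apply: Rle_mult_inv_pos; lra.
have [N [hN1 hN2]] := floor_nat _ hq.
have [d [hd1 hd2]] := floor_nat (17 * L) ltac:(lra).
have [k [hk1 hk2]] := ceil_nat r ltac:(lra).
have [s [hs1 hs2]] := ceil_nat (r / 2) ltac:(lra).
have hNr : INR N * (7/2 * L) <= r.
  have := Rmult_le_compat_r (7/2 * L) _ _ ltac:(lra) hN1.
  have -> : r / (7 / 2 * L) * (7 / 2 * L) = r by field; lra.
  done.
have hNr' : r < (INR N + 1) * (7/2 * L).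
  have := Rmult_lt_compat_r (7/2 * L) _ _ ltac:(lra) hN2.
  have -> : r / (7 / 2 * L) * (7 / 2 * L) = r by field; lra.
  done.
have hN4 : (4 <= N)%N.
  have : 3 < INR N by nra.
  move=> h; apply/ltP; apply: INR_lt; simpl; lra.
have hA := coreA n N s r L hn hLn hL1 hLr (ltac:(lia) : (1 <= N)%N) hNr hs1.
rewrite subn1 in hA.
have hB : forall w, (0 < w -> w <= k -> w <= n ->
     8 * n * 'C(n,w) * 'C('C(w,2), Eb d w) <= N ^ Eb d w)%N.
  move=> w hw0 hwk hwn.
  case: (leqP (Eb d w) 'C(w,2)) => hEM; last by rewrite (bin_small hEM) muln0.
  apply: (coreB n N d w (Eb d w) r L hn hLn hL1 hLr hN4 hNr') => //.
  - lra.
  - have := INR_leq hwk. lra.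
  - rewrite /Eb; lia.
have hN0 : (0 < N)%N by lia.
have hN1' : (1 < N)%N by lia.
pose a0 : 'I_N := Ordinal hN0.
pose a1 : 'I_N := Ordinal hN1'.
have [f [h1 h2 h3 h4]] := exists_good a0 a1 hA (ltac:(lia) : (0 < n)%N) hB.
exists (e2 e f a0 a1).
have e2sym : symmetric (e2 e f a0 a1).
  move=> u v; by rewrite /e2 eq_sym esym (Zf_sym f a1 u v) (Zf_sym f a0 u v).
split.
  split => //. by move=> u; rewrite /e2 eqxx.
split.
- move=> S hS. have [[K [hKS [hK hKr]]] [I [hIS [hI hIr]]]] := hram S hS.
  have hL17 : 0 < 17 * L by lra.
  have hfin : forall J : {set 'I_n}, (k <= #|J| * d)%N -> r / (17 * L) <= INR #|J|.
    move=> J hJ. have := INR_leq hJ. rewrite INR_mul => h.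
    have : r <= INR #|J| * (17 * L).
      have : 0 <= INR #|J| by apply: pos_INR.
      nra.
    move=> h'. apply: (Rmult_le_reg_r (17 * L)) => //.
    have -> : r / (17 * L) * (17 * L) = r by field; lra.
    done.
  split.
  + have hkK : (k <= #|K|)%N.
      have : INR k < INR #|K| + 1 by lra.
      rewrite -S_INR => /INR_lt /ltP. lia.
    have [K0 hK0K hK0] := subset_of_size _ _ _ hkK.
    have hg := notBB_greedy h4 (ltac:(rewrite hK0; exact: leqnn) : (#|K0| <= k)%N).
    have [J [hJK hJ hJs]] := greedy (Zf_sym f a1) hg.
    exists J; split; first by apply: (subset_trans hJK); apply: (subset_trans hK0K).
    split; last by apply: hfin; rewrite -hK0.
    move=> x y hx hy hxy. rewrite /e2 hxy /=.
    have hxK : x \in K by apply: (subsetP hK0K); apply: (subsetP hJK).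
    have hyK : y \in K by apply: (subsetP hK0K); apply: (subsetP hJK).
    by rewrite (hK x y hxK hyK hxy) (hJ x y hx hy hxy).
  + have hkI : (k <= #|I|)%N.
      have : INR k < INR #|I| + 1 by lra.
      rewrite -S_INR => /INR_lt /ltP. lia.
    have [I0 hI0I hI0] := subset_of_size _ _ _ hkI.
    have hg := notBB_greedy h3 (ltac:(rewrite hI0; exact: leqnn) : (#|I0| <= k)%N).
    have [J [hJI hJ hJs]] := greedy (Zf_sym f a0) hg.
    exists J; split; first by apply: (subset_trans hJI); apply: (subset_trans hI0I).
    split; last by apply: hfin; rewrite -hI0.
    move=> x y hx hy hxy. rewrite /e2 hxy /=.
    have hxI : x \in I by apply: (subsetP hI0I); apply: (subsetP hJI).
    have hyI : y \in I by apply: (subsetP hI0I); apply: (subsetP hJI).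
    by rewrite (negbTE (hI x y hxI hyI hxy)) (negbTE (hJ x y hx hy hxy)).
- move=> S hS.
  have hsS : (s <= #|S|)%N.
    have : INR s < INR #|S| + 1 by lra.
    rewrite -S_INR => /INR_lt /ltP. lia.
  have [S0 hS0S hS0] := subset_of_size _ _ _ hsS.
  split.
  + have [u [v [hu hv huv hz]]] := notBA h1 hS0.
    exists [set u; v]; split.
      by rewrite subUset !sub1set (subsetP hS0S _ hu) (subsetP hS0S _ hv).
    split; first by apply: pair_clique => //; rewrite /e2 huv hz orbT.
    by rewrite cards2 huv /=; lra.
  + have [u [v [hu hv huv hz]]] := notBA h2 hS0.
    exists [set u; v]; split.
      by rewrite subUset !sub1set (subsetP hS0S _ hu) (subsetP hS0S _ hv).
    split.
      apply: pair_indep => //; rewrite /e2 huv hz /= andbF /=.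
      move: hz; rewrite /Zf huv /= => /eqP ->.
      by apply/eqP => /(congr1 val).
    by rewrite cards2 huv /=; lra.
Qed.
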